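(* Let $A\in\mathbb{R}^{m\times n}$ be semi-monotone, let $A=P_1-R_1+S_1$ be a double proper weak regular splitting and $A=P_2-R_2+S_2$ a double proper regular splitting of $A$. Suppose $N(S_2)\supseteq N(P_2)$, $R(S_2)\subseteq R(P_2)$, $1\notin\sigma(S_2P_1^{\dagger})$ and $\widehat{A}^{\dagger}\geq 0$, where $\widehat{A}=(I-S_2P_1^{\dagger})A$. If $P_1^{\dagger}R_1\geq P_2^{\dagger}R_2$ and $P_2^{\dagger}S_2\geq P_1^{\dagger}S_1$, then $\rho(W_{12})\leq\rho(T_1)<1$, where $$W_{12}=\begin{pmatrix} P_2^{\dagger}R_2-P_2^{\dagger}S_2P_1^{\dagger}R_1 & P_2^{\dagger}S_2P_1^{\dagger}S_1\\ I & 0\end{pmatrix},\qquad T_1=\begin{pmatrix} P_1^{\dagger}R_1 & -P_1^{\dagger}S_1\\ I&0\end{pmatrix}.$$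
   Context: For $M\in\mathbb{R}^{m\times n}$, $M^{\dagger}$ is its Moore–Penrose inverse, $R(M)$, $N(M)$ its range and null space; inequalities are entrywise; $\rho$ is the spectral radius, $\sigma$ the spectrum. $A$ is semi-monotone if $A^{\dagger}\geq 0$. A double splitting $A=P-R+S$ is a double proper splitting if $R(P)=R(A)$ and $N(P)=N(A)$; it is double proper regular if moreover $P^{\dagger}\geq0$, $R\geq0$, $S\leq0$; double proper weak regular if moreover $P^{\dagger}\geq 0$, $P^{\dagger}R\geq 0$, $P^{\dagger}S\leq 0$. *)

(* Defs.v *)
From HB Require Import structures.
From mathcomp Require Import all_boot all_order all_algebra.
From mathcomp Require Import complex.
Set Implicit Arguments. Unset Strict Implicit. Unset Printing Implicit Defensive.
Import Order.TTheory GRing.Theory Num.Theory.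
Local Open Scope ring_scope.

(* Real matrices are modelled over an arbitrary real closed field R
   (this includes the real numbers); complex eigenvalues live in R[i]. *)

(* X is the Moore-Penrose inverse of A (the four Penrose equations;
   over the reals the conjugate transpose is the transpose). *)
Definition is_MP_inverse (R : rcfType) (m n : nat)
  (A : 'M[R]_(m, n)) (X : 'M[R]_(n, m)) : Prop :=
  [/\ A *m X *m A = A, X *m A *m X = X,
      (A *m X)^T = A *m X & (X *m A)^T = X *m A].

Definition mx_ge0 (R : rcfType) (m n : nat) (A : 'M[R]_(m, n)) : Prop :=
  forall i j, 0 <= A i j.
Definition mx_le0 (R : rcfType) (m n : nat) (A : 'M[R]_(m, n)) : Prop :=
  forall i j, A i j <= 0.
Definition mx_le (R : rcfType) (m n : nat) (A B : 'M[R]_(m, n)) : Prop :=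
  forall i j, A i j <= B i j.

Definition in_range (R : rcfType) (m n : nat) (M : 'M[R]_(m, n)) (y : 'cV[R]_m) : Prop :=
  exists x : 'cV[R]_n, y = M *m x.
Definition in_null (R : rcfType) (m n : nat) (M : 'M[R]_(m, n)) (x : 'cV[R]_n) : Prop :=
  M *m x = 0.

Definition same_range (R : rcfType) (m n : nat) (M N : 'M[R]_(m, n)) : Prop :=
  forall y, in_range M y <-> in_range N y.
Definition same_null (R : rcfType) (m n : nat) (M N : 'M[R]_(m, n)) : Prop :=
  forall x, in_null M x <-> in_null N x.

Definition double_proper_splitting (R : rcfType) (m n : nat)
  (A P Rm S : 'M[R]_(m, n)) : Prop :=
  [/\ A = P - Rm + S, same_range P A & same_null P A].

Definition double_proper_regular (R : rcfType) (m n : nat)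
  (A P Rm S : 'M[R]_(m, n)) (Pd : 'M[R]_(n, m)) : Prop :=
  [/\ double_proper_splitting A P Rm S, is_MP_inverse P Pd,
      mx_ge0 Pd, mx_ge0 Rm & mx_le0 S].

Definition double_proper_weak_regular (R : rcfType) (m n : nat)
  (A P Rm S : 'M[R]_(m, n)) (Pd : 'M[R]_(n, m)) : Prop :=
  [/\ double_proper_splitting A P Rm S, is_MP_inverse P Pd,
      mx_ge0 Pd, mx_ge0 (Pd *m Rm) & mx_le0 (Pd *m S)].

Definition spectrum (R : rcfType) (n : nat) (A : 'M[R]_n) : seq R[i] :=
  sval (closed_field_poly_normal (char_poly (map_mx (real_complex R) A))).

(* spectral radius: max |lambda| over the spectrum (0 for the empty matrix) *)
Definition spectral_radius (R : rcfType) (n : nat) (A : 'M[R]_n) : R :=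
  \big[Num.max/0]_(z <- spectrum A) Normc.normc z.

(* Main.v *)
Require Import Defs.
From HB Require Import structures.
From mathcomp Require Import all_boot all_order all_algebra.
From mathcomp Require Import complex polyrcf.
From mathcomp Require Import ring lra.
Set Implicit Arguments. Unset Strict Implicit. Unset Printing Implicit Defensive.
Import Order.TTheory GRing.Theory Num.Theory.
Local Open Scope ring_scope.

Section Basics.
Variable R : rcfType.

Lemma ge0_mul m n p (A : 'M[R]_(m, n)) (B : 'M[R]_(n, p)) :
  mx_ge0 A -> mx_ge0 B -> mx_ge0 (A *m B).
Proof. by move=> hA hB i j; rewrite mxE; apply: sumr_ge0 => k _; apply: mulr_ge0. Qed.

Lemma ge0_add m n (A B : 'M[R]_(m, n)) : mx_ge0 A -> mx_ge0 B -> mx_ge0 (A + B).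
Proof. by move=> hA hB i j; rewrite mxE; apply: addr_ge0. Qed.

Lemma ge0_scale m n a (A : 'M[R]_(m, n)) : 0 <= a -> mx_ge0 A -> mx_ge0 (a *: A).
Proof. by move=> ha hA i j; rewrite mxE; apply: mulr_ge0. Qed.

Lemma ge0_0 m n : mx_ge0 (0 : 'M[R]_(m, n)).
Proof. by move=> i j; rewrite mxE. Qed.

Lemma ge0_1 n : mx_ge0 (1%:M : 'M[R]_n).
Proof. by move=> i j; rewrite mxE; case: (i == j). Qed.

Lemma ge0_oppP m n (A : 'M[R]_(m, n)) : mx_le0 A -> mx_ge0 (- A).
Proof. by move=> h i j; rewrite mxE oppr_ge0. Qed.

Lemma mx_leE m n (A B : 'M[R]_(m, n)) : mx_le A B <-> mx_ge0 (B - A).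
Proof.
split=> h i j; first by rewrite !mxE subr_ge0.
by have := h i j; rewrite !mxE subr_ge0.
Qed.

Lemma ge0_row m n1 n2 (A : 'M[R]_(m, n1)) (B : 'M[R]_(m, n2)) :
  mx_ge0 (row_mx A B) <-> mx_ge0 A /\ mx_ge0 B.
Proof.
split.
  by move=> h; split=> i j; [rewrite -(row_mxEl A B) | rewrite -(row_mxEr A B)].
move=> [hA hB] i j; case: (split_ordP j) => k ->; [rewrite row_mxEl | rewrite row_mxEr]; by [].
Qed.

Lemma le_row m n1 n2 (A A' : 'M[R]_(m, n1)) (B B' : 'M[R]_(m, n2)) :
  mx_le (row_mx A B) (row_mx A' B') <-> mx_le A A' /\ mx_le B B'.
Proof.
rewrite !mx_leE opp_row_mx add_row_mx; exact: ge0_row.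
Qed.

Lemma ge0_block m1 m2 n1 n2 (A : 'M[R]_(m1, n1)) (B : 'M[R]_(m1, n2))
  (C : 'M[R]_(m2, n1)) (D : 'M[R]_(m2, n2)) :
  mx_ge0 A -> mx_ge0 B -> mx_ge0 C -> mx_ge0 D -> mx_ge0 (block_mx A B C D).
Proof.
move=> hA hB hC hD i j; rewrite /block_mx; case: (split_ordP i) => k ->.
  by rewrite col_mxEu; exact: (proj2 (ge0_row A B) (conj hA hB)).
by rewrite col_mxEd; exact: (proj2 (ge0_row C D) (conj hC hD)).
Qed.

Lemma ge0_ulsub n1 n2 (B : 'M[R]_(n1 + n2)) : mx_ge0 B -> mx_ge0 (ulsubmx B).
Proof. by move=> h i j; rewrite !mxE; apply: h. Qed.
Lemma ge0_ursub n1 n2 (B : 'M[R]_(n1 + n2)) : mx_ge0 B -> mx_ge0 (ursubmx B).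
Proof. by move=> h i j; rewrite !mxE; apply: h. Qed.
Lemma ge0_dlsub n1 n2 (B : 'M[R]_(n1 + n2)) : mx_ge0 B -> mx_ge0 (dlsubmx B).
Proof. by move=> h i j; rewrite !mxE; apply: h. Qed.
Lemma ge0_drsub n1 n2 (B : 'M[R]_(n1 + n2)) : mx_ge0 B -> mx_ge0 (drsubmx B).
Proof. by move=> h i j; rewrite !mxE; apply: h. Qed.

Lemma ge0_antisym m n (A : 'M[R]_(m, n)) : mx_ge0 A -> mx_ge0 (- A) -> A = 0.
Proof.
move=> h1 h2; apply/matrixP => i j; have := h2 i j; rewrite !mxE oppr_ge0 => h.
by apply/eqP; rewrite eq_le h h1.
Qed.

Definition rmono n (s : R) (B : 'M[R]_n) :=
  forall x : 'rV[R]_n, mx_ge0 (x *m (s%:M - B)) -> mx_ge0 x.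

Lemma rmono_unit n s (B : 'M[R]_n) : rmono s B -> (s%:M - B) \in unitmx.
Proof.
move=> h; rewrite unitmxE unitfE; apply/negP => /det0P [v vn0 hv].
move/negP: vn0; apply; apply/eqP; apply: ge0_antisym; apply: h.
  by rewrite hv; apply: ge0_0.
by rewrite mulNmx hv oppr0; apply: ge0_0.
Qed.

Lemma rmono_inv n s (B : 'M[R]_n) : rmono s B -> mx_ge0 (invmx (s%:M - B)).
Proof.
move=> h i j; have hu := rmono_unit h.
have H := h (row i (invmx (s%:M - B))).
rewrite -row_mul mulVmx // in H.
have : mx_ge0 (row i (invmx (s%:M - B))).
  by apply: H => k l; rewrite !mxE; case: (i == l).
by move/(_ 0 j); rewrite mxE.
Qed.

Lemma mx11E (a : 'M[R]_1) : a = (a 0 0)%:M.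
Proof. exact: mx11_scalar. Qed.

Lemma mul11 n (a : 'M[R]_1) (B : 'M[R]_(1, n)) : a *m B = a 0 0 *: B.
Proof. by rewrite {1}[a]mx11_scalar mul_scalar_mx. Qed.


Lemma sub_block n s (B : 'M[R]_(1 + n)) :
  s%:M - B = block_mx (s%:M - ulsubmx B) (- ursubmx B) (- dlsubmx B) (s%:M - drsubmx B).
Proof.
by rewrite -{1}(submxK B) scalar_mx_block opp_block_mx add_block_mx !sub0r.
Qed.

Lemma ge0_11 (a : 'M[R]_1) : 0 <= a 0 0 -> mx_ge0 a.
Proof. by move=> h i j; rewrite !ord1. Qed.

Lemma step_pos n (B : 'M[R]_(1 + n)) s :
  mx_ge0 B -> rmono s (drsubmx B) ->
  0 < s - ulsubmx B 0 0
        - (ursubmx B *m invmx (s%:M - drsubmx B) *m dlsubmx B) 0 0 ->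
  rmono s B.
Proof.
move=> hB hm hsig x hx.
have hu := rmono_unit hm; have hG := rmono_inv hm.
move: hsig hx hu hG hm.
set b := ulsubmx B; set c := ursubmx B; set d := dlsubmx B; set B' := drsubmx B.
set D := s%:M - B'; set G := invmx D => hsig hx hu hG hm.
have hc : mx_ge0 c by apply: ge0_ursub.
have hd : mx_ge0 d by apply: ge0_dlsub.
rewrite -(hsubmxK x) in hx *.
set x0 := lsubmx x; set x' := rsubmx x.
move: hx; rewrite (sub_block s B) -/b -/c -/d -/B' -/D mul_row_block.
move=> /ge0_row [h0 h'].
set y' := x0 *m - c + x' *m D in h'.
have ex' : x' = y' *m G + x0 *m c *m G.
  rewrite /y' mulmxDl -[x' *m D *m G]mulmxA mulmxV // mulmx1 mulmxN mulNmx.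
  by rewrite addrAC addNr add0r.
have hx0 : mx_ge0 x0.
  apply: ge0_11.
  have e : x0 *m (s%:M - b - c *m G *m d) =
           (x0 *m (s%:M - b) + x' *m - d) + y' *m G *m d.
    rewrite ex' mulmxBr mulmxN mulmxDl !mulmxA.
    move: (x0 *m (s%:M - b)) (y' *m G *m d) (x0 *m c *m G *m d) => a1 a2 a3.
    by apply/matrixP => i j; rewrite !mxE; ring.
  have : 0 <= (x0 *m (s%:M - b - c *m G *m d)) 0 0.
    rewrite e mxE; apply: addr_ge0; first exact: h0.
    by apply: ge0_mul; [apply: ge0_mul|].
  rewrite mul11 mxE.
  move: hsig; move: (c *m G *m d) => w hsig.
  have -> : (s%:M - b - w) 0 0 = s - b 0 0 - w 0 0 by rewrite !mxE eqxx mulr1n.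
  by rewrite (pmulr_lge0 _ hsig).
have hx' : mx_ge0 x'.
  by rewrite ex'; apply: ge0_add; apply: ge0_mul => //; apply: ge0_mul.
exact: (proj2 (ge0_row x0 x') (conj hx0 hx')).
Qed.

Definition altP n (B : 'M[R]_n) s :=
  rmono s B \/ exists y : 'rV[R]_n, [/\ mx_ge0 y, y != 0 & mx_le (s *: y) (y *m B)].

Lemma alt_step n s (IH : forall B : 'M[R]_n, mx_ge0 B -> altP B s)
  (B : 'M[R]_(1 + n)) : mx_ge0 B -> altP B s.
Proof.
move=> hB.
have hB' : mx_ge0 (drsubmx B) by apply: ge0_drsub.
case: (IH _ hB') => [hm | [y' [hy'0 hy'n hy'le]]].
  have hu := rmono_unit hm; have hG := rmono_inv hm.
  have [hsig|hsig] := ltrP 0 (s - ulsubmx B 0 0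
        - (ursubmx B *m invmx (s%:M - drsubmx B) *m dlsubmx B) 0 0).
    by left; apply: step_pos.
  right; move: hsig hu hG hm.
  set b := ulsubmx _; set c := ursubmx _; set d := dlsubmx _; set B' := drsubmx _.
  set D := s%:M - B'; set G := invmx D => hsig hu hG hm.
  have hc : mx_ge0 c by apply: ge0_ursub.
  exists (row_mx 1%:M (c *m G)); split.
  - apply/ge0_row.
    by split; [exact: ge0_1 | exact: ge0_mul hc hG].
  - apply/negP => /eqP /(congr1 (fun M : 'rV[R]_(1 + n) => M 0 (lshift n 0))).
    rewrite row_mxEl.
    by rewrite !mxE eqxx /= => /eqP; rewrite oner_eq0.
  - have -> : B = block_mx b c d B' by rewrite submxK.
    rewrite mul_row_block scale_row_mx.
    apply/le_row; split.
      rewrite mul1mx; move: hsig; move: (c *m G *m d) => e hsig.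
      move=> i j; rewrite !ord1.
      have -> : (s *: (1%:M : 'M[R]_1)) 0 0 = s by rewrite !mxE eqxx mulr1.
      have -> : (b + e) 0 0 = b 0 0 + e 0 0 by rewrite mxE.
      lra.
    have hGB : G *m B' = s *: G - 1%:M.
      have := mulVmx hu; rewrite -/G /D mulmxBr mul_mx_scalar => <-.
      by rewrite opprB addrC subrK.
    rewrite mul1mx -mulmxA hGB mulmxBr mulmx1 -scalemxAr addrC subrK.
    by move=> i j; exact: lexx.
right; exists (row_mx 0 y'); split.
- by apply/ge0_row; split; [exact: ge0_0 | exact: hy'0].
- apply: contra hy'n => /eqP; rewrite -row_mx0 => /eq_row_mx [_ ->] //.
- rewrite -[in X in mx_le _ X](submxK B) mul_row_block scale_row_mx scaler0 !mul0mx !add0r.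
  apply/le_row; split=> //.
  apply/mx_leE; rewrite subr0; apply: ge0_mul => //; exact: ge0_dlsub.
Qed.

Lemma alt n (B : 'M[R]_n) s : mx_ge0 B -> altP B s.
Proof.
elim: n B => [|n IH] B hB.
  by left => x _ i j; case: j.
exact: (alt_step IH hB).
Qed.

Lemma charE n (C : 'M[R]_n) u : (char_poly C).[u] = \det (u%:M - C).
Proof.
rewrite /char_poly -horner_evalE -det_map_mx; congr (\det _); apply/matrixP => i j.
by rewrite !mxE /= horner_evalE hornerD hornerN hornerMn hornerX hornerC.
Qed.

Lemma det_pos n (C : 'M[R]_n) s :
  (forall v, s <= v -> \det (v%:M - C) != 0) -> 0 < \det (s%:M - C).
Proof.
move=> h; rewrite -charE.
have hl : 0 < lead_coef (char_poly C) by rewrite (monicP (char_poly_monic C)) ltr01.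
have [N hN] := poly_pinfty_gt_lc hl.
set x := Num.max s N.
have hsx : s <= x by rewrite le_max lexx.
have hx : 0 < (char_poly C).[x].
  by apply: lt_le_trans hl (hN _ _); rewrite le_max lexx orbT.
rewrite ltNge; apply/negP => hs.
have hps : (char_poly C).[s] * (char_poly C).[x] <= 0 by rewrite (pmulr_lle0 _ hx).
have [r hr rootr] := polyrcf.poly_ivt hsx hps.
have hsr : s <= r by move: hr; rewrite in_itv /= => /andP [].
by have := h r hsr; rewrite -charE (rootP rootr) eqxx.
Qed.

Lemma det_schur n (a : 'M[R]_1) (u : 'M[R]_(1, n)) (v : 'M[R]_(n, 1)) (D : 'M[R]_n) :
  D \in unitmx -> \det (block_mx a u v D) = (a - u *m invmx D *m v) 0 0 * \det D.
Proof.
move=> hD.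
have -> : block_mx a u v D =
    block_mx 1%:M (u *m invmx D) 0 1%:M *m block_mx (a - u *m invmx D *m v) 0 v D.
  rewrite mulmx_block !mul1mx !mul0mx.
  by rewrite !add0r subrK -mulmxA mulVmx // mulmx1.
rewrite det_mulmx det_ublock det_lblock.
by rewrite !det1 !mul1r det_mx11.
Qed.

Lemma det_sub_block n s (B : 'M[R]_(1 + n)) :
  (s%:M - drsubmx B) \in unitmx ->
  \det (s%:M - B) = (s - ulsubmx B 0 0
      - (ursubmx B *m invmx (s%:M - drsubmx B) *m dlsubmx B) 0 0)
    * \det (s%:M - drsubmx B).
Proof.
move=> hu; rewrite sub_block det_schur // !mulNmx !mulmxN !opprK; congr (_ * _).
move: (ursubmx B *m invmx (s%:M - drsubmx B) *m dlsubmx B) => w.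
by rewrite !mxE eqxx mulr1n.
Qed.

Lemma poly_le_right (g : {poly R}) t :
  (forall u, t < u -> g.[u] <= 0) -> g.[t] <= 0.
Proof.
move=> h; rewrite leNgt; apply/negP => hgt.
have [d hd hcont] := poly_cont t g hgt.
have hd2 : 0 < d / 2 by rewrite divr_gt0.
have htu : t < t + d / 2 by rewrite ltrDl.
have := h _ htu.
have : `|t + d / 2 - t| < d.
  rewrite addrAC subrr add0r ger0_norm ?ltW //.
  by rewrite ltr_pdivrMr // ltr_pMr // ltr1n.
move/hcont; rewrite ltr_norml => /andP [h1 h2] h3.
lra.
Qed.

Lemma largest_root (p : {poly R}) u0 : p != 0 -> root p u0 ->
  exists t, [/\ u0 <= t, root p t & forall v, t < v -> ~~ root p v].
Proof.
move=> p0 r0.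
set K := Num.max u0 (cauchy_bound p) + 1.
have hK1 : u0 < K by rewrite /K ltr_pwDr ?ltr01 // le_max lexx.
have hK2 : cauchy_bound p < K by rewrite /K ltr_pwDr ?ltr01 // le_max lexx orbT.
have big : forall v, K <= v -> ~~ root p v.
  move=> v hv; apply: (ge_cauchy_bound p0).
  by rewrite in_itv /= andbT; apply: le_trans (ltW hK2) hv.
case: (prev_rootP p u0 K) => [p00 | y _ py0 hy hno | c _ hc hno].
- by rewrite p00 eqxx in p0.
- exists y; split.
  + by move: hy; rewrite in_itv /= => /andP [/ltW].
  + by apply/rootP.
  + move=> v hv; have [hvK|hvK] := ltrP v K; last exact: big.
    by apply: hno; rewrite in_itv /= hv hvK.
- exists u0; split => //.
  move=> v hv; have [hvK|hvK] := ltrP v K; last exact: big.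
  by apply: hno; rewrite in_itv /= hv hvK.
Qed.

Definition noroot_ge n (B : 'M[R]_n) s := forall u, s <= u -> \det (u%:M - B) != 0.

Lemma pfb_step n (IH : forall (B : 'M[R]_n) s, mx_ge0 B -> noroot_ge B s -> rmono s B)
  (B : 'M[R]_(1 + n)) s : mx_ge0 B -> noroot_ge B s -> rmono s B.
Proof.
move=> hB hno.
have hB' : mx_ge0 (drsubmx B) by apply: ge0_drsub.
have hc : mx_ge0 (ursubmx B) by apply: ge0_ursub.
have hd : mx_ge0 (dlsubmx B) by apply: ge0_dlsub.
have claimA : noroot_ge (drsubmx B) s.
  move=> u0 hu0; apply/negP => /eqP hdet0.
  have p0 : char_poly (drsubmx B) != 0 by apply: monic_neq0; apply: char_poly_monic.
  have r0 : root (char_poly (drsubmx B)) u0 by apply/rootP; rewrite charE.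
  have [t [ht rt hnot]] := largest_root p0 r0.
  have hnoB' : forall u, t < u -> noroot_ge (drsubmx B) u.
    move=> u htu w huw; rewrite -charE; apply: (hnot w).
    exact: lt_le_trans htu huw.
  set g := char_poly B - char_poly (drsubmx B) * ('X - (ulsubmx B 0 0)%:P).
  have hg : forall u, t < u -> g.[u] <= 0.
    move=> u htu.
    have hm := IH _ _ hB' (hnoB' u htu).
    have hu := rmono_unit hm; have hG := rmono_inv hm.
    have hdp := det_pos (hnoB' u htu).
    rewrite /g hornerD hornerN hornerM hornerD hornerN hornerX hornerC !charE.
    rewrite det_sub_block //.
    have : 0 <= (ursubmx B *m invmx (u%:M - drsubmx B) *m dlsubmx B) 0 0.
      by apply: ge0_mul => //; apply: ge0_mul.
    move: (ursubmx B *m invmx (u%:M - drsubmx B) *m dlsubmx B) => w hw.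
    move: hdp; move: (\det (u%:M - drsubmx B)) => dd hdp.
    nra.
  have := poly_le_right hg.
  rewrite /g hornerD hornerN hornerM (rootP rt) mul0r subr0 charE.
  have hst : s <= t by apply: le_trans hu0 ht.
  have : 0 < \det (t%:M - B).
    apply: det_pos => w htw; apply: hno; exact: le_trans hst htw.
  move=> h1 h2; lra.
have hm := IH _ _ hB' claimA.
apply: step_pos => //.
have hu := rmono_unit hm.
have h1 := det_pos hno; have h2 := det_pos claimA.
move: h1; rewrite det_sub_block //.
by rewrite (pmulr_lgt0 _ h2).
Qed.

Lemma pfb n (B : 'M[R]_n) s : mx_ge0 B -> noroot_ge B s -> rmono s B.
Proof.
elim: n B s => [|n IH] B s hB hno.
  by move=> x _ i j; case: j.
exact: (pfb_step IH hB hno).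
Qed.

Lemma charEg (F : comNzRingType) n (C : 'M[F]_n) u : (char_poly C).[u] = \det (u%:M - C).
Proof.
rewrite /char_poly -horner_evalE -det_map_mx; congr (\det _); apply/matrixP => i j.
by rewrite !mxE /= horner_evalE hornerD hornerN hornerMn hornerX hornerC.
Qed.

Lemma normc_ge0 (z : R[i]) : 0 <= Normc.normc z.
Proof. by case: z => a b; rewrite /Normc.normc sqrtr_ge0. Qed.

Lemma normc_real (a : R) : 0 <= a -> Normc.normc ((a%:C)%C) = a.
Proof.
move=> ha; rewrite /Normc.normc /= expr0n /= addr0 sqrtr_sqr ger0_norm //.
Qed.

Lemma normc_sum n (F : 'I_n -> R[i]) :
  Normc.normc (\sum_i F i) <= \sum_i Normc.normc (F i).
Proof.
apply: (big_ind2 (fun a b => Normc.normc a <= b)).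
- by rewrite Normc.normc0.
- move=> x1 x2 y1 y2 h1 h2; apply: le_trans (le_normcD _ _) _; exact: lerD.
- by move=> i _; exact: lexx.
Qed.

Lemma bigmax_ge_elt (r : seq R[i]) z : z \in r ->
  Normc.normc z <= \big[Num.max/0]_(x <- r) Normc.normc x.
Proof.
elim: r => [//|a r IH]; rewrite big_cons in_cons => /orP [/eqP -> | /IH h].
  by rewrite le_max lexx.
by rewrite le_max h orbT.
Qed.

Lemma rho_ge0 n (B : 'M[R]_n) : 0 <= spectral_radius B.
Proof.
rewrite /spectral_radius; apply: (big_ind (fun x => 0 <= x)) => //.
  by move=> x y hx hy; rewrite le_max hx.
by move=> z _; apply: normc_ge0.
Qed.

Lemma spectrum_root n (B : 'M[R]_n) z :
  (z \in spectrum B) = root (char_poly (map_mx (real_complex R) B)) z.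
Proof.
rewrite /spectrum; case: (closed_field_poly_normal (char_poly (map_mx (real_complex R) B))) => r /= hr.
rewrite [in RHS]hr (monicP (char_poly_monic _)) scale1r.
by rewrite root_prod_XsubC.
Qed.

Lemma rho_ge n (B : 'M[R]_n) u : 0 <= u -> \det (u%:M - B) = 0 ->
  u <= spectral_radius B.
Proof.
move=> hu hd.
have hin : (u%:C)%C \in spectrum B.
  rewrite spectrum_root -map_char_poly; apply/rootP.
  by rewrite horner_map /= charEg hd rmorph0.
by have := bigmax_ge_elt hin; rewrite normc_real.
Qed.

Lemma rho_lt n (B : 'M[R]_n) s : 0 < s -> mx_ge0 B -> rmono s B ->
  spectral_radius B < s.
Proof.
move=> hs hB hm.
rewrite /spectral_radius big_seq; apply: (big_ind (fun x => x < s)) => //.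
  by move=> x y hx hy; rewrite gt_max hx.
move=> z; rewrite spectrum_root => /rootP; rewrite charEg => /eqP /det0P [v vn0 hv].
set Bc := map_mx _ B in hv.
have hvB : v *m Bc = z *: v.
  by move: hv; rewrite mulmxBr mul_mx_scalar => /eqP; rewrite subr_eq0 => /eqP <-.
set w : 'rV[R]_n := \row_j Normc.normc (v 0 j).
have hw : mx_ge0 w by move=> i j; rewrite mxE; apply: normc_ge0.
rewrite ltNge; apply/negP => hz.
have hw2 : mx_ge0 (- w).
  apply: hm; rewrite mulNmx mulmxBr mul_mx_scalar opprB => i j.
  have e1 : (v *m Bc) 0 j = (z *: v) 0 j by rewrite hvB.
  move: e1; rewrite !mxE => e1.
  rewrite subr_ge0 (ord1 i).
  apply: le_trans (_ : Normc.normc z * Normc.normc (v 0 j) <= _).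
    by apply: ler_wpM2r => //; apply: normc_ge0.
  rewrite -Normc.normcM -e1; apply: le_trans (normc_sum _) _.
  apply: ler_sum => k _; rewrite /Bc !mxE Normc.normcM normc_real //.
have w0 : w = 0 by apply: ge0_antisym.
move/negP: vn0; apply; apply/eqP/matrixP => i0 j; rewrite (ord1 i0) [RHS]mxE.
apply: Normc.eq0_normc; move/matrixP: w0 => /(_ 0 j); rewrite !mxE.
by [].
Qed.

Lemma mx_eq_col m n (M N : 'M[R]_(m, n)) : (forall x : 'cV_n, M *m x = N *m x) -> M = N.
Proof.
move=> h; apply/matrixP => i j; have := h (delta_mx j 0); rewrite -!colE.
by move/(congr1 (fun X : 'cV_m => X i 0)); rewrite !mxE.
Qed.

Lemma proper_ids m n (A P : 'M[R]_(m, n)) (Ad Pd : 'M[R]_(n, m)) :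
  is_MP_inverse A Ad -> is_MP_inverse P Pd -> same_range P A -> same_null P A ->
  Pd *m P = Ad *m A /\ P *m Pd = A *m Ad.
Proof.
move=> [a1 a2 a3 a4] [p1 p2 p3 p4] hr hn.
have h1 : A = A *m (Pd *m P).
  apply: mx_eq_col => x.
  have : in_null P (x - Pd *m P *m x).
    by rewrite /in_null mulmxBr !mulmxA p1 subrr.
  move/hn; rewrite /in_null mulmxBr => /eqP; rewrite subr_eq0 => /eqP ->.
  by rewrite !mulmxA.
have h2 : P = P *m (Ad *m A).
  apply: mx_eq_col => x.
  have : in_null A (x - Ad *m A *m x).
    by rewrite /in_null mulmxBr !mulmxA a1 subrr.
  move/hn; rewrite /in_null mulmxBr => /eqP; rewrite subr_eq0 => /eqP ->.
  by rewrite !mulmxA.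
have h3 : A = P *m Pd *m A.
  apply: mx_eq_col => x.
  have : in_range A (A *m x) by exists x.
  move/hr => [w hw]; by rewrite -!mulmxA hw !mulmxA p1.
have h4 : P = A *m Ad *m P.
  apply: mx_eq_col => x.
  have : in_range P (P *m x) by exists x.
  move/hr => [w hw]; by rewrite -!mulmxA hw !mulmxA a1.
split.
  have e1 : Ad *m A = Ad *m A *m (Pd *m P) by rewrite -mulmxA -h1.
  have e2 : Pd *m P = Pd *m P *m (Ad *m A) by rewrite -mulmxA -h2.
  by rewrite e2 -p4 -a4 -trmx_mul -e1 a4.
have e1 : A *m Ad = P *m Pd *m (A *m Ad) by rewrite mulmxA -h3.
have e2 : P *m Pd = A *m Ad *m (P *m Pd) by rewrite mulmxA -h4.
by rewrite e2 -p3 -a3 -trmx_mul -e1 a3.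
Qed.

Lemma keyK m n (A P : 'M[R]_(m, n)) (Ad Pd : 'M[R]_(n, m)) :
  is_MP_inverse A Ad -> is_MP_inverse P Pd -> same_range P A -> same_null P A ->
  (1%:M - Pd *m (P - A)) *m Ad = Pd.
Proof.
move=> hA hP hr hn; have [e1 e2] := proper_ids hA hP hr hn.
case: hA => a1 a2 _ _; case: hP => p1 p2 _ _.
rewrite mulmxBl mul1mx mulmxBr mulmxBl e1.
by rewrite a2 -(mulmxA Pd) -e2 mulmxA p2 opprB addrC subrK.
Qed.

End Basics.

Theorem theorem3p4 (R : rcfType) (m n : nat)
  (A P1 R1 S1 P2 R2 S2 : 'M[R]_(m, n))
  (Ad P1d P2d : 'M[R]_(n, m)) (Ahatd : 'M[R]_(n, m)) :
  (* A is semi-monotone *)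
  is_MP_inverse A Ad -> mx_ge0 Ad ->
  double_proper_weak_regular A P1 R1 S1 P1d ->
  double_proper_regular A P2 R2 S2 P2d ->
  (* N(S2) contains N(P2), R(S2) contained in R(P2) *)
  (forall x, in_null P2 x -> in_null S2 x) ->
  (forall y, in_range S2 y -> in_range P2 y) ->
  (* 1 is not in the spectrum of S2 P1^dagger *)
  (1 \notin spectrum (S2 *m P1d)) ->
  (* Ahat^dagger >= 0 with Ahat = (I - S2 P1^dagger) A *)
  is_MP_inverse ((1%:M - S2 *m P1d) *m A) Ahatd -> mx_ge0 Ahatd ->
  mx_le (P2d *m R2) (P1d *m R1) ->
  mx_le (P1d *m S1) (P2d *m S2) ->
  let W12 := block_mx (P2d *m R2 - P2d *m S2 *m P1d *m R1) (P2d *m S2 *m P1d *m S1)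
                      (1%:M : 'M[R]_n) 0 in
  let T1 := block_mx (P1d *m R1) (- (P1d *m S1)) (1%:M : 'M[R]_n) 0 in
  spectral_radius W12 <= spectral_radius T1 /\ spectral_radius T1 < 1.
Proof.
move=> hA hAd [[eA1 hr1 hn1] hP1 hP1d hX1 hS1] [[eA2 hr2 hn2] hP2 hP2d hR2 hS2]
  _ _ _ _ _ hle1 hle2 W12 T1.
have hY1 : mx_ge0 (- (P1d *m S1)) by apply: ge0_oppP.
have hX2 : mx_ge0 (P2d *m R2) by apply: ge0_mul.
have hY2 : mx_ge0 (- (P2d *m S2)) by rewrite -mulmxN; apply: ge0_mul => //; apply: ge0_oppP.
have hT1 : mx_ge0 T1.
  by apply: ge0_block => //; [apply: ge0_1 | apply: ge0_0].
have eTL : P2d *m R2 - P2d *m S2 *m P1d *m R1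
         = P2d *m R2 + (- (P2d *m S2)) *m (P1d *m R1).
  by rewrite mulNmx !mulmxA.
have eTR : P2d *m S2 *m P1d *m S1 = (- (P2d *m S2)) *m (- (P1d *m S1)).
  by rewrite mulNmx mulmxN opprK !mulmxA.
have hW : mx_ge0 W12.
  rewrite /W12 eTL eTR; apply: ge0_block; last exact: ge0_0.
  - by apply: ge0_add => //; apply: ge0_mul.
  - by apply: ge0_mul.
  - exact: ge0_1.
have hK := keyK hA hP1 hr1 hn1.
have part1 : spectral_radius T1 < 1.
  apply: (rho_lt ltr01 hT1).
  case: (alt 1 hT1) => [//|[y [hy0 hyn hyle]]]; exfalso.
  move: hy0 hyn hyle; rewrite -(hsubmxK y).
  move: (lsubmx y) (rsubmx y) => y1 y2 hy0 hyn hyle.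
  move/ge0_row: hy0 => [hy1 hy2].
  move: hyle; rewrite /T1 mul_row_block scale1r mulmx1 mulmx0 addr0 => /le_row [ha hb].
  have hH : P1d *m R1 + - (P1d *m S1) = P1d *m (P1 - A).
    rewrite eA1 !(mulmxBr, mulmxDr, mulmxN).
    by apply/matrixP => i j; rewrite !mxE; ring.
  have he : mx_ge0 (y1 *m (P1d *m (P1 - A)) - y1).
    rewrite -hH mulmxDr; apply/mx_leE.
    apply/mx_leE; move/mx_leE: ha => ha; move/mx_leE: hb => hb.
    have := ge0_add ha hb.
    have -> : y1 *m (P1d *m R1) + y2 - y1 + (y1 *m - (P1d *m S1) - y2)
           = y1 *m (P1d *m R1) + y1 *m - (P1d *m S1) - y1.
      by apply/matrixP => i j; rewrite !mxE; ring.
    by [].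
  have hyP : y1 *m P1d = 0.
    apply: ge0_antisym; first by apply: ge0_mul.
    rewrite -hK mulmxA mulmxBr mulmx1.
    have -> : - ((y1 - y1 *m (P1d *m (P1 - A))) *m Ad)
            = (y1 *m (P1d *m (P1 - A)) - y1) *m Ad by rewrite !mulmxBl opprB.
    by apply: ge0_mul.
  have y10 : y1 = 0.
    apply: ge0_antisym => //.
    by move: he; rewrite mulmxA hyP mul0mx sub0r.
  have y20 : y2 = 0.
    apply: ge0_antisym => //.
    by move/mx_leE: hb; rewrite y10 mul0mx sub0r.
  by move/negP: hyn; apply; rewrite y10 y20 row_mx0.
split => //.
set t := spectral_radius T1.
have ht0 : 0 <= t := rho_ge0 T1.
rewrite leNgt; apply/negP => hlt.
set rW := spectral_radius W12 in hlt.
set s := (t + Num.min rW 1) / 2.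
have hm1 : Num.min rW 1 <= 1 by rewrite ge_min lexx orbT.
have hm2 : Num.min rW 1 <= rW by rewrite ge_min lexx.
have hm3 : t < Num.min rW 1 by rewrite lt_min hlt part1.
have hts : t < s by rewrite /s; lra.
have hs1 : s < 1 by rewrite /s; lra.
have hsW : s < rW by rewrite /s; lra.
have hs0 : 0 < s by lra.
have hsn0 : s != 0 by rewrite gt_eqF.
case: (alt s hW) => [hmW | [y [hy0 hyn hyle]]].
  by have := rho_lt hs0 hW hmW; rewrite -/rW; lra.
move: hy0 hyn hyle; rewrite -(hsubmxK y).
move: (lsubmx y) (rsubmx y) => y1 y2 hy0 hyn hyle.
move/ge0_row: hy0 => [hy1 hy2].
move: hyle; rewrite /W12 eTL eTR mul_row_block scale_row_mx mulmx1 mulmx0 addr0.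
move=> /le_row [ha hb].
move/mx_leE: ha => ha; move/mx_leE: hb => hb.
set X1 := P1d *m R1 in hX1 hle1 ha hb *.
set Y1 := - (P1d *m S1) in hY1 ha hb *.
set X2 := P2d *m R2 in hX2 hle1 ha hb *.
set Y2 := - (P2d *m S2) in hY2 ha hb *.
have hXX : mx_ge0 (X1 - X2) by apply/mx_leE.
have hYY : mx_ge0 (Y1 - Y2).
  rewrite /Y1 /Y2 opprK addrC; exact/mx_leE.
set c := s^-1 * s^-1.
have hc1 : 1 <= c.
  have h : 1 <= s^-1 by rewrite invf_ge1 // ltW.
  by rewrite /c; apply: mulr_ege1.
have hsi : 0 <= s^-1 by rewrite invr_ge0 ltW.
set z1 := y1 + c *: (y1 *m Y2).
set z2 := s^-1 *: (z1 *m Y1).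
have hz1 : mx_ge0 z1.
  apply: ge0_add => //; apply: ge0_scale; [lra | exact: ge0_mul].
have hz2 : mx_ge0 z2 by apply: ge0_scale => //; apply: ge0_mul.
set z := row_mx z1 z2.
have E : z1 *m X1 + z2 - s *: z1 =
    y1 *m (X1 - X2) + s^-1 *: (y1 *m (Y1 - Y2))
    + (y1 *m (X2 + Y2 *m X1) + y2 - s *: y1)
    + s^-1 *: (y1 *m (Y2 *m Y1) - s *: y2)
    + (c - 1) *: (y1 *m Y2 *m (X1 + s^-1 *: Y1)).
  rewrite /z2 /z1 /c.
  do 4 (rewrite ?(mulmxDl, mulmxDr, mulmxBr, mulmxBl, mulmxN, mulNmx, mulmxA);
         rewrite -?scalemxAl -?scalemxAr).
  apply/matrixP => i j; rewrite !mxE.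
  by field.
have hzle : mx_ge0 (z *m T1 - s *: z).
  rewrite /z /T1 mul_row_block mulmx1 mulmx0 addr0 scale_row_mx opp_row_mx add_row_mx.
  apply/ge0_row; split.
    rewrite E; apply: ge0_add; last first.
      apply: ge0_scale; first lra.
      apply: ge0_mul; first by apply: ge0_mul.
      by apply: ge0_add => //; apply: ge0_scale.
    apply: ge0_add; last by apply: ge0_scale.
    apply: ge0_add => //.
    by apply: ge0_add; [apply: ge0_mul | apply: ge0_scale => //; apply: ge0_mul].
  by rewrite /z2 scalerA mulfV // scale1r subrr; apply: ge0_0.
have hzn : z != 0.
  apply/negP => /eqP hz0.
  have : z1 = 0 /\ z2 = 0 by apply/eq_row_mx; rewrite row_mx0.
  case => z10 _.
  have y10 : y1 = 0.
    apply: ge0_antisym => //.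
    have -> : - y1 = c *: (y1 *m Y2) - z1 by rewrite /z1 opprD addrCA subrr addr0.
    rewrite z10 subr0; apply: ge0_scale; [lra | exact: ge0_mul].
  have y20 : y2 = 0.
    apply: ge0_antisym => //.
    move: hb; rewrite y10 !mul0mx sub0r -scaleNr => hb i j.
    have := hb i j; rewrite !mxE.
    move=> h; rewrite -(pmulr_rge0 _ hs0); lra.
  by move/negP: hyn; apply; rewrite y10 y20 row_mx0.
have hnoT : noroot_ge T1 s.
  move=> u hu; apply/negP => /eqP hd.
  have := rho_ge (ltW (lt_le_trans hs0 hu)) hd; rewrite -/t; lra.
have hmT := pfb hT1 hnoT.
have : mx_ge0 (- z).
  apply: hmT; rewrite mulNmx mulmxBr mul_mx_scalar opprB; exact: hzle.
move=> hz'; have hz0 : mx_ge0 z by apply/ge0_row.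
by move/negP: hzn; apply; apply/eqP; apply: ge0_antisym.
Qed.
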